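(* Let $A$ be a minimally AP-irreducible sign pattern matrix with all diagonal entries equal to $0$ such that $A[\alpha,\beta]$ contains no $+$ for any two distinct irreducible components $\alpha$ and $\beta$ of $A_+$. Suppose that $Q(A)$ contains an algebraically positive matrix having a simple positive eigenvalue with corresponding entrywise positive left and right eigenvectors. If $X$ is a super-pattern of $A$ such that $x_{ij}\neq a_{ij}$ for precisely one ordered pair $(i,j)$, then $Q(X)$ also contains an algebraically positive matrix having a simple positive eigenvalue with corresponding entrywise positive left and right eigenvectors.
   Context: A sign pattern matrix has entries in $\{+,-,0\}$; its qualitative class $Q(A)$ is the set of real matrices obtained by replacing each $+$ by some positive number, each $-$ by some negative number and each $0$ by $0$. A real square matrix $M$ is algebraically positive if there is a real polynomial $f$ with $f(M)$ entrywise positive. $X$ is a super-pattern of $A$ if $A$ is obtained from $X$ by replacing some (possibly none) nonzero entries with $0$. The digraph $D(M)$ of an $n\times n$ matrix $M$ has vertex set $\{1,\dots,n\}$ and an arc $i\to j$ iff $m_{ij}\neq0$; $M$ is irreducible if $n=1$ or $D(M)$ is strongly connected. For a sign pattern $A$: $A_+$ is obtained by replacing every entry that is not $+$ by $0$; $B_A$ is the sign pattern with $(B_A)_{ij}=+$ if $a_{ij}=+$ or $a_{ji}=-$, and $0$ otherwise. An irreducible sign pattern $A$ is AP-irreducible if every row and every column contains a $+$ and $B_A$ is irreducible; it is minimally AP-irreducible if it is AP-irreducible and does not remain so after replacing any single nonzero entry by $0$. $A[\alpha,\beta]$ is the submatrix with rows in $\alpha$ and columns in $\beta$. The irreducible components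 of a sign pattern $M$ are the vertex sets of the strongly connected components of $D(M)$ (maximal $\alpha$ with $M[\alpha,\alpha]$ irreducible). *)

(* Defs.v *)
From HB Require Import structures.
From mathcomp Require Import all_boot all_order all_algebra.
From mathcomp Require Import reals.
Set Implicit Arguments. Unset Strict Implicit. Unset Printing Implicit Defensive.
Import Order.TTheory GRing.Theory Num.Theory.
Local Open Scope ring_scope.

Inductive sgn := SPos | SNeg | SZero.

Definition is_pos (s : sgn) : bool := if s is SPos then true else false.
Definition is_neg (s : sgn) : bool := if s is SNeg then true else false.
Definition is_nz (s : sgn) : bool := if s is SZero then false else true.

Notation spat n := 'M[sgn]_n.+1.

Definition in_Q (R : realType) (n : nat) (A : spat n) (M : 'M[R]_n.+1) : Prop :=
  forall i j, match A i j with
              | SPos => 0 < M i j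
              | SNeg => M i j < 0
              | SZero => M i j == 0
              end.

Definition alg_pos (R : realType) (n : nat) (M : 'M[R]_n.+1) : Prop :=
  exists f : {poly R}, forall i j, 0 < (horner_mx M f) i j.

Definition simple_pos_eig_pos_vecs (R : realType) (n : nat) (M : 'M[R]_n.+1)
  : Prop :=
  exists r : R, [/\ 0 < r, mup r (char_poly M) = 1%N &
    exists (v : 'cV[R]_n.+1) (u : 'rV[R]_n.+1),
      [/\ M *m v = r *: v, u *m M = r *: u,
          forall i, 0 < v i 0 & forall i, 0 < u 0 i]].

Definition arc (n : nat) (A : spat n) : rel 'I_n.+1 := fun i j => is_nz (A i j).

Definition irreducible_sp (n : nat) (A : spat n) : Prop :=
  n.+1 = 1%N \/ forall i j, connect (arc A) i j.

Definition pos_part (n : nat) (A : spat n) : spat n :=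
  \matrix_(i, j) if is_pos (A i j) then SPos else SZero.

Definition B_of (n : nat) (A : spat n) : spat n :=
  \matrix_(i, j) if is_pos (A i j) || is_neg (A j i) then SPos else SZero.

Definition AP_irreducible (n : nat) (A : spat n) : Prop :=
  [/\ irreducible_sp A,
      forall i, exists j, A i j = SPos,
      forall j, exists i, A i j = SPos
    & irreducible_sp (B_of A)].

Definition zero_entry (n : nat) (A : spat n) (i j : 'I_n.+1) : spat n :=
  \matrix_(k, l) if (k == i) && (l == j) then SZero else A k l.

Definition min_AP_irreducible (n : nat) (A : spat n) : Prop :=
  AP_irreducible A /\
  forall i j, is_nz (A i j) -> ~ AP_irreducible (zero_entry A i j).

Definition same_comp (n : nat) (M : spat n) (i j : 'I_n.+1) : bool :=
  connect (arc M) i j && connect (arc M) j i.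

Definition super_pattern (n : nat) (X A : spat n) : Prop :=
  forall i j, A i j = X i j \/ A i j = SZero.

(* Main.v *)
Require Import Defs.
From HB Require Import structures.
From mathcomp Require Import all_boot all_order all_algebra.
From mathcomp Require Import reals.
From mathcomp Require Import ring lra.
Set Implicit Arguments. Unset Strict Implicit. Unset Printing Implicit Defensive.
Import Order.TTheory GRing.Theory Num.Theory.
Local Open Scope ring_scope.


Section Near.
Variable R : realType.

Lemma poly_bound (p : {poly R}) :
  exists B : R, 0 <= B /\ forall t, 0 <= t -> t <= 1 -> `|p.[t]| <= B.
Proof.
elim/poly_ind: p => [|p c [B [B0 HB]]].
  by exists 0; split => // t _ _; rewrite horner0 normr0.
exists (B + `|c|); split; first by rewrite addr_ge0.
move=> t t0 t1; rewrite hornerMXaddC.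
apply: (le_trans (ler_normD _ _)); rewrite lerD2r normrM.
have ht : `|t| <= 1 by rewrite ger0_norm.
have := HB t t0 t1; have := normr_ge0 p.[t]; have := normr_ge0 t; nra.
Qed.

Lemma poly_pos_near0 (p : {poly R}) : 0 < p.[0] ->
  exists2 d : R, 0 < d & forall t, 0 < t -> t <= d -> 0 < p.[t].
Proof.
have [q [c ->]] : exists q c, p = q * 'X + c%:P.
  by elim/poly_ind: p => [|q c _]; [exists 0, 0; rewrite mul0r add0r|exists q, c].
rewrite hornerMXaddC mulr0 add0r => c0.
have [B [B0 HB]] := poly_bound q.
exists (Num.min 1 (c / (B + 1))).
  by rewrite lt_min ltr01 divr_gt0 // ltr_pwDr.
move=> t t0; rewrite le_min => /andP[t1 tc].
rewrite hornerMXaddC.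
have := HB t (ltW t0) t1; rewrite ler_norml => /andP[Hl _].
have B1 : 0 < B + 1 by rewrite ltr_pwDr.
have : t * (B + 1) <= c by rewrite -ler_pdivlMr.
nra.
Qed.

Lemma polys_pos_near0 (I : eqType) (s : seq I) (p : I -> {poly R}) :
  (forall i, i \in s -> 0 < (p i).[0]) ->
  exists2 d : R, 0 < d & forall t, 0 < t -> t <= d -> forall i, i \in s -> 0 < (p i).[t].
Proof.
elim: s => [|a s IH] H.
  by exists 1 => //.
have [d1 d10 H1] := poly_pos_near0 (H a (mem_head _ _)).
have [d2 d20 H2] : exists2 d : R, 0 < d & forall t, 0 < t -> t <= d -> forall i, i \in s -> 0 < (p i).[t].
  by apply: IH => i si; apply: H; rewrite inE si orbT.
exists (Num.min d1 d2); first by rewrite lt_min d10 d20.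
move=> t t0; rewrite le_min => /andP[td1 td2] i; rewrite inE => /orP[/eqP->|si].
  exact: H1.
exact: H2.
Qed.

Lemma fam_pos_near0 (I : finType) (p : I -> {poly R}) :
  (forall i, 0 < (p i).[0]) ->
  exists2 d : R, 0 < d & forall t, 0 < t -> t <= d -> forall i, 0 < (p i).[t].
Proof.
move=> H; have [d d0 Hd] := @polys_pos_near0 _ (enum I) p (fun i _ => H i).
by exists d => // t t0 td i; apply: Hd; rewrite ?mem_enum.
Qed.

End Near.

Lemma mup_deriv (F : fieldType) (p : {poly F}) x : root p x ->
  (mup x p == 1%N) = (p^`().[x] != 0).
Proof.
move=> /factor_theorem [q ->].
rewrite derivM derivXsubC mulr1 hornerD hornerM hornerXsubC subrr mulr0 add0r.
have [rq|nrq] := boolP (root q x); last first.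
  rewrite (mupMr _ nrq) -[('X - x%:P)]expr1 mup_XsubCX eqxx.
  by rewrite /root in nrq; rewrite nrq; apply/eqP.
rewrite (eqP rq) eqxx /=.
move: rq => /factor_theorem [q2 ->].
have [->|q2N0] := eqVneq q2 0.
  rewrite !mul0r /mup; case: arg_maxnP => //= i _ _.
  by move: i; rewrite size_poly0 => i; rewrite (ord1 i).
have pN0 : q2 * ('X - x%:P) * ('X - x%:P) != 0.
  by rewrite !mulf_neq0 // polyXsubC_eq0.
apply/negbTE; rewrite neq_ltn; apply/orP; right.
by rewrite mup_geq // -mulrA -expr2 dvdp_mull.
Qed.


Section Walk.
Variables (R : comNzRingType) (n : nat).

Fixpoint walkmx (x : 'I_n.+1) (p : seq 'I_n.+1) : 'M[R]_n.+1 :=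
  if p is y :: p' then delta_mx x y + walkmx y p' else 0.

Lemma rowsum_delta (a b k : 'I_n.+1) :
  \sum_l (delta_mx a b : 'M[R]_n.+1) k l = (k == a)%:R.
Proof.
rewrite (bigD1 b) //= big1 ?addr0 => [|l /negbTE nl]; rewrite mxE ?nl ?eqxx ?andbT ?andbF //.
Qed.

Lemma colsum_delta (a b k : 'I_n.+1) :
  \sum_l (delta_mx a b : 'M[R]_n.+1) l k = (k == b)%:R.
Proof.
rewrite (bigD1 a) //= big1 ?addr0 => [|l /negbTE nl]; rewrite mxE ?nl ?eqxx ?andbF //.
Qed.

Lemma walk_bal x p k :
  \sum_l walkmx x p k l - \sum_l walkmx x p l k = (k == x)%:R - (k == last x p)%:R.
Proof.
elim: p x => [|y p IH] x /=.
  by rewrite !big1 ?subrr // => l _; rewrite mxE.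
have E1 : \sum_l (delta_mx x y + walkmx y p) k l = (k == x)%:R + \sum_l walkmx y p k l.
  by rewrite -(rowsum_delta x y) -big_split /=; apply: eq_bigr => l _; rewrite mxE.
have E2 : \sum_l (delta_mx x y + walkmx y p) l k = (k == y)%:R + \sum_l walkmx y p l k.
  by rewrite -(colsum_delta x y) -big_split /=; apply: eq_bigr => l _; rewrite mxE.
rewrite E1 E2.
have := IH y; set a := \sum_l _; set b := \sum_l _ => Hy.
have -> : (k == x)%:R + a - ((k == y)%:R + b) = (k == x)%:R - (k == y)%:R + (a - b) :> R by ring.
rewrite Hy; ring.
Qed.

Lemma walk_supp (e : rel 'I_n.+1) x p k l : path e x p -> ~~ e k l -> walkmx x p k l = 0.
Proof.
elim: p x => [|y p IH] x /=; first by rewrite mxE.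
move=> /andP[exy pp] nkl; rewrite mxE IH // addr0 mxE.
case: eqP => [ek|] //; case: eqP => [el|] //=; subst.
by rewrite exy in nkl.
Qed.

End Walk.

Section Eig.
Variables (R : fieldType) (n : nat).

Lemma eig_construct (W : 'M[R]_n.+1) (u : 'rV[R]_n.+1) (c : R) :
  (forall k, \sum_l W k l = \sum_l W l k) -> (forall k, u 0 k != 0) ->
  let sg k := \sum_l W k l in
  let N := \matrix_(k, l) (c / u 0 k * W k l * (\prod_(m | m != l) sg m) * u 0 l) in
  u *m N = (c * \prod_m sg m) *: u /\
  N *m (\col_l (sg l / u 0 l)) = (c * \prod_m sg m) *: \col_l (sg l / u 0 l).
Proof.
move=> Hs Hu sg N; split.
  apply/rowP => l; rewrite !mxE [in RHS](bigD1 l) //=.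
  have -> : \sum_k u 0 k * N k l = c * (\prod_(m | m != l) sg m) * u 0 l * \sum_k W k l.
    rewrite mulr_sumr; apply: eq_bigr => k _; rewrite mxE.
    by field; rewrite ?Hu.
  by rewrite -Hs; rewrite -/(sg l); ring.
apply/colP => k; rewrite !mxE.
have -> : \sum_l N k l * (\col_l (sg l / u 0 l)) l 0 = c / u 0 k * (\prod_m sg m) * \sum_l W k l.
  rewrite mulr_sumr; apply: eq_bigr => l _; rewrite !mxE [in RHS](bigD1 l) //=.
  by field; rewrite !Hu.
by rewrite /sg; field; apply: Hu.
Qed.

End Eig.


Lemma root_left_eig (F : fieldType) n (N : 'M[F]_n) (u : 'rV_n) a :
  u *m N = a *: u -> u != 0 -> root (char_poly N) a.
Proof. by move=> H u0; rewrite -eigenvalue_root_char; apply/eigenvalueP; exists u. Qed.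

Lemma horner_mx_eval (R : realType) n (Np : 'M[{poly R}]_n.+1) (f : {poly R}) t :
  horner_mx (map_mx (horner_eval t) Np) f =
  map_mx (horner_eval t) (horner_mx Np (map_poly polyC f)).
Proof.
rewrite map_horner_mx -map_poly_comp map_poly_id // => a _ /=.
by rewrite horner_evalE hornerC.
Qed.

Lemma deriv_eval (R : realType) n (Np : 'M[{poly R}]_n.+1) (L : {poly R}) t :
  ((char_poly (map_mx (horner_eval t) Np))^`()).[L.[t]] =
  (((char_poly Np)^`()).[L]).[t].
Proof.
by rewrite -map_char_poly deriv_map -[RHS]horner_evalE -horner_map.
Qed.

Unset Implicit Arguments.
Theorem lemma3p12 (R : realType) (n : nat) (A X : 'M[sgn]_n.+1) :
  min_AP_irreducible A ->
  (forall i, A i i = SZero) ->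
  (* A[alpha,beta] has no + for distinct irreducible components alpha, beta of A_+ *)
  (forall i j, ~~ same_comp (pos_part A) i j -> A i j <> SPos) ->
  (exists M : 'M[R]_n.+1,
      [/\ in_Q A M, alg_pos M & simple_pos_eig_pos_vecs M]) ->
  super_pattern X A ->
  (exists i j, X i j <> A i j /\
     forall k l, X k l <> A k l -> k = i /\ l = j) ->
  exists M : 'M[R]_n.+1,
    [/\ in_Q X M, alg_pos M & simple_pos_eig_pos_vecs M].
Proof.
move=> [[irrA _ _ _] _] _ _ [M [QM [f Hf] [r [r0 mupr [v [u [Mv uM vpos upos]]]]]]].
move=> sup [i [j [Xij uniqij]]].
have Aij : A i j = SZero by case: (sup i j) => // h; rewrite h in Xij.
have XA : forall k l, ~ (k = i /\ l = j) -> X k l = A k l.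
  move=> k l nkl; have := uniqij k l.
  by case: (X k l); case: (A k l) => // H; exfalso; apply: nkl; apply: H.
have [p pth lst] : exists2 p : seq 'I_n.+1, path (Defs.arc A) j p & i = last j p.
  case: irrA => [n0|conn]; last exact/connectP/conn.
  exists [::] => //=; apply/val_inj.
  have H : forall a b : nat, (a < n.+1)%N -> (b < n.+1)%N -> a = b.
    by move=> a b; rewrite n0 !ltnS !leqn0 => /eqP-> /eqP->.
  exact: (H _ _ (ltn_ord i) (ltn_ord j)).
pose s : R := if X i j is SPos then 1 else -1.
pose C : 'M[R]_n.+1 := s *: (delta_mx i j + walkmx R j p).
have Cbal : forall k, \sum_l C k l = \sum_l C l k.
  move=> k; apply/eqP; rewrite -subr_eq0.
  have E1 : \sum_l C k l = s * (\sum_l (delta_mx i j : 'M[R]_n.+1) k l + \sum_l walkmx R j p k l).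
    by rewrite -big_split mulr_sumr; apply: eq_bigr => l _; rewrite !mxE.
  have E2 : \sum_l C l k = s * (\sum_l (delta_mx i j : 'M[R]_n.+1) l k + \sum_l walkmx R j p l k).
    by rewrite -big_split mulr_sumr; apply: eq_bigr => l _; rewrite !mxE.
  have := walk_bal R j p k; rewrite -lst rowsum_delta colsum_delta in E1 E2 *.
  rewrite E1 E2 => H; apply/eqP.
  have -> : s * ((k == i)%:R + \sum_l walkmx R j p k l) - s * ((k == j)%:R + \sum_l walkmx R j p l k)
     = s * ((k == i)%:R - (k == j)%:R + (\sum_l walkmx R j p k l - \sum_l walkmx R j p l k)) by ring.
  by rewrite H; ring.
have Cij : C i j = s.
  rewrite !mxE (@walk_supp R n (Defs.arc A) j p _ _ pth) // ?eqxx ?mulr1 ?addr0 //.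
  by rewrite mulr1. by rewrite /Defs.arc Aij.
have Csupp : forall k l, ~ (k = i /\ l = j) -> A k l = SZero -> C k l = 0.
  move=> k l nkl Akl; rewrite !mxE (@walk_supp R n (Defs.arc A) j p _ _ pth) //; last by rewrite /Defs.arc Akl.
  case: eqP => [ek|]; case: eqP => [el|] //=; try by rewrite addr0 mulr0.
  by exfalso; apply: nkl.

have unz : forall k, u 0 k != 0 by move=> k; rewrite gt_eqF ?upos.
have vnz : forall k, v k 0 != 0 by move=> k; rewrite gt_eqF ?vpos.
have rnz : r != 0 by rewrite gt_eqF.
pose W0 : 'M[R]_n.+1 := \matrix_(k,l) (u 0 k * M k l * v l 0).
pose rho k := r * u 0 k * v k 0.
have W0row : forall k, \sum_l W0 k l = rho k.
  move=> k; have := congr1 (fun m : 'cV[R]_n.+1 => m k 0) Mv; rewrite !mxE => H.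
  rewrite /rho (_ : r * u 0 k * v k 0 = u 0 k * (r * v k 0)); last by ring.
  rewrite -H mulr_sumr; apply: eq_bigr => l _; rewrite mxE; ring.
have W0col : forall k, \sum_l W0 l k = rho k.
  move=> k; have := congr1 (fun m : 'rV[R]_n.+1 => m 0 k) uM; rewrite !mxE => H.
  rewrite /rho -H mulr_suml; apply: eq_bigr => l _; rewrite mxE; ring.
have rho0 : forall k, 0 < rho k by move=> k; rewrite !mulr_gt0.
pose P := \prod_m rho m.
have P0 : 0 < P by apply: prodr_gt0 => m _.
pose c := r / P.
have c0 : 0 < c by rewrite divr_gt0.
pose Wp : 'M[{poly R}]_n.+1 := \matrix_(k,l) ((W0 k l)%:P + 'X * (C k l)%:P).
pose sp k := \sum_l Wp k l.
pose Np : 'M[{poly R}]_n.+1 := \matrix_(k,l)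
   ((c / u 0 k)%:P * Wp k l * (\prod_(m | m != l) sp m) * (u 0 l)%:P).
pose Lp := c%:P * \prod_m sp m.
pose Wt (t : R) : 'M[R]_n.+1 := \matrix_(k,l) (W0 k l + t * C k l).
have WtS : forall t k, \sum_l Wt t k l = rho k + t * \sum_l C k l.
  move=> t k; rewrite -W0row mulr_sumr -big_split; apply: eq_bigr => l _; rewrite mxE.
  done.
have WtS' : forall t k, \sum_l Wt t l k = rho k + t * \sum_l C l k.
  move=> t k; rewrite -W0col mulr_sumr -big_split; apply: eq_bigr => l _; rewrite mxE.
  done.
have Wtbal : forall t k, \sum_l Wt t k l = \sum_l Wt t l k.
  by move=> t k; rewrite WtS WtS' Cbal.
have spE : forall t k, (sp k).[t] = \sum_l Wt t k l.
  move=> t k; rewrite horner_sum; apply: eq_bigr => l _; rewrite !mxE.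
  by rewrite hornerD hornerC hornerM hornerX hornerC.
have NtE : forall t, map_mx (horner_eval t) Np = \matrix_(k,l)
    (c / u 0 k * Wt t k l * (\prod_(m | m != l) \sum_l' Wt t m l') * u 0 l).
  move=> t; apply/matrixP => k l; rewrite !mxE horner_evalE !hornerM !hornerC horner_prod.
  congr (_ * _ * _ * _); last by apply: eq_bigr => m _; rewrite spE.
  by rewrite hornerD hornerC hornerM hornerX hornerC.
have LpE : forall t, Lp.[t] = c * \prod_m \sum_l Wt t m l.
  by move=> t; rewrite hornerM hornerC horner_prod; congr (_ * _); apply: eq_bigr => m _; rewrite spE.
have Wt0 : Wt 0 = W0 by apply/matrixP => k l; rewrite mxE mul0r addr0.
have N0 : map_mx (horner_eval 0) Np = M.
  rewrite NtE Wt0; apply/matrixP => k l; rewrite !mxE.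
  under eq_bigr => m _ do rewrite W0row.
  have HP : P = rho l * \prod_(m | m != l) rho m by rewrite /P (bigD1 l).
  have HP' : \prod_(m | m != l) rho m != 0 by rewrite gt_eqF // prodr_gt0.
  rewrite /c HP /rho /=; field.
  by rewrite /rho in HP'; rewrite HP' rnz !unz vnz.
have N0e : forall k l, (Np k l).[0] = M k l.
  by move=> k l; rewrite -[RHS]/(M k l) -N0 /map_mx [RHS]mxE.
have L0 : Lp.[0] = r.
  rewrite LpE Wt0; under eq_bigr => m _ do rewrite W0row.
  by rewrite /c -/P; field; rewrite gt_eqF.
have u0 : u != 0.
  by apply/eqP => u0; have := upos ord0; rewrite u0 mxE ltxx.
pose Q := ((char_poly Np)^`()).[Lp].
have Q0 : Q.[0] != 0.
  rewrite /Q -deriv_eval N0 L0 -mup_deriv; first by rewrite mupr.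
  exact: root_left_eig uM u0.
pose Qs := if 0 < Q.[0] then Q else - Q.
have Qs0 : 0 < Qs.[0].
  rewrite /Qs; case: ifP => // /negbT; rewrite -leNgt hornerN oppr_gt0 => H.
  by rewrite lt_neqAle Q0 H.
pose F2 (kl : 'I_n.+1 * 'I_n.+1) := match A kl.1 kl.2 with
   SPos => Np kl.1 kl.2 | SNeg => - Np kl.1 kl.2 | SZero => 1 end.
pose F3 (kl : 'I_n.+1 * 'I_n.+1) := (horner_mx Np (map_poly polyC f)) kl.1 kl.2.
have F1pos : forall k, 0 < (sp k).[0] by move=> k; rewrite spE Wt0 W0row.
have [d1 d10 H1] := fam_pos_near0 F1pos.
have F2pos : forall kl, 0 < (F2 kl).[0].
  case=> k l; rewrite /F2 /=; have := QM k l.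
  by case: (A k l); rewrite ?hornerN ?oppr_gt0 ?N0e ?hornerC ?ltr01.
have [d2 d20 H2] := fam_pos_near0 F2pos.
have F3pos : forall kl, 0 < (F3 kl).[0].
  case=> k l; rewrite /F3 /= -horner_evalE.
  have -> : horner_eval 0 (horner_mx Np (map_poly polyC f) k l) =
     (map_mx (horner_eval 0) (horner_mx Np (map_poly polyC f))) k l by rewrite /map_mx [RHS]mxE.
  by rewrite -horner_mx_eval N0; apply: Hf.
have [d3 d30 H3] := fam_pos_near0 F3pos.
have [d4 d40 H4] := @fam_pos_near0 R _ (fun _ : unit => Qs) (fun _ => Qs0).
pose t := Num.min d1 (Num.min d2 (Num.min d3 d4)).
have t0 : 0 < t by rewrite !lt_min d10 d20 d30 d40.
have [td1 td2 td3 td4] : [/\ t <= d1, t <= d2, t <= d3 & t <= d4].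
  by split; rewrite /t !ge_min lexx ?orbT.

have sgt : forall m, 0 < \sum_l Wt t m l by move=> m; rewrite -spE; apply: H1.
have piE : forall l, 0 < \prod_(m | m != l) \sum_l' Wt t m l'.
  by move=> l; apply: prodr_gt0 => m _; apply: sgt.
have Nte : forall k l, (map_mx (horner_eval t) Np) k l = (Np k l).[t].
  by move=> k l; rewrite /map_mx [LHS]mxE.
exists (map_mx (horner_eval t) Np); split.
- move=> k l.
  case: (boolP ((k == i) && (l == j))) => [/andP[/eqP-> /eqP->]|nkl].
    have Mij : M i j = 0 by have := QM i j; rewrite Aij => /eqP.
    rewrite NtE mxE mxE mxE Mij Cij mulr0 mul0r add0r.
    have K0 : 0 < c / u 0 i * (\prod_(m | m != j) \sum_l' Wt t m l') * u 0 j.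
      exact: (mulr_gt0 (mulr_gt0 (divr_gt0 c0 (upos i)) (piE j)) (upos j)).
    have -> : c / u 0 i * (t * s) * (\prod_(m | m != j) \sum_l' Wt t m l') * u 0 j
       = (c / u 0 i * (\prod_(m | m != j) \sum_l' Wt t m l') * u 0 j) * t * s by ring.
    rewrite /s; move: Xij; case: (X i j); rewrite ?Aij // => _.
      by rewrite mulr1 mulr_gt0.
    by rewrite mulrN1 oppr_lt0 mulr_gt0.
  have nkl' : ~ (k = i /\ l = j) by move=> [ek el]; rewrite ek el !eqxx in nkl.
  rewrite (XA _ _ nkl') Nte.
  have := H2 t t0 td2 (k, l); rewrite /F2 /=.
  case E: (A k l) => //; rewrite ?hornerN ?oppr_gt0 // => _.
  rewrite -Nte NtE mxE mxE (Csupp _ _ nkl' E).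
  have := QM k l; rewrite E /W0 mxE => /eqP->.
  by rewrite !mulr0 !mul0r addr0 mulr0 !mul0r.
- exists f => k l; rewrite horner_mx_eval /map_mx mxE.
  exact: (H3 t t0 td3 (k, l)).
- have [eu ev] := eig_construct c (Wtbal t) unz.
  rewrite -NtE in eu ev.
  exists Lp.[t]; split.
  + by rewrite LpE mulr_gt0 // prodr_gt0.
  + apply/eqP; rewrite mup_deriv; last by rewrite LpE; exact: root_left_eig eu u0.
    rewrite deriv_eval -/Q.
    have := H4 t t0 td4 tt; rewrite /Qs; case: ifP => _ H; first by rewrite gt_eqF.
    by rewrite -oppr_eq0 -hornerN gt_eqF.
  + exists (\col_l ((\sum_l' Wt t l l') / u 0 l)), u; split.
    * by rewrite LpE.
    * by rewrite LpE.
    * by move=> k; rewrite mxE divr_gt0.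
    * exact: upos.
Qed.
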